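(* Fix a positive integer $k$ and let $a_n=\left\lceil \frac{2^{n+k-1}}{2^k+1}\right\rceil$ for $n\ge 1$. Then the sequence $(\Gamma(a_n,a_{n+1}))_{n\ge 1}$ is $$\underbrace{1,\ldots,1}_{k},\underbrace{2,\ldots,2}_{k},\underbrace{1,\ldots,1}_{k},\underbrace{2,\ldots,2}_{k},\ldots,$$ i.e., it consists of alternating blocks of $k$ ones and $k$ twos, starting with a block of ones.
   Context: For relatively prime positive integers $p,q$, exactly one of the equations $px+qy=\frac{(p-1)(q-1)}{2}$ (Equation 1) and $px+qy+1=\frac{(p-1)(q-1)}{2}$ (Equation 2) has a solution in nonnegative integers $(x,y)$. For positive integers $a,b$ with $d=\gcd(a,b)$, $\Gamma(a,b)=1$ if Equation 1 with $(p,q)=(a/d,b/d)$ has a nonnegative integer solution, and $\Gamma(a,b)=2$ otherwise. *)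

(* Defs.v *)
From mathcomp Require Import all_boot.
From mathcomp Require Import boolp.
Set Implicit Arguments. Unset Strict Implicit. Unset Printing Implicit Defensive.

(* Equation 1 for (p,q): p x + q y = (p-1)(q-1)/2 has a solution in nonnegative
   integers. For coprime p,q, (p-1)(q-1) is even, so nat division by 2 is exact. *)
Definition eq1_solvable (p q : nat) : Prop :=
  exists x y : nat, p * x + q * y = ((p - 1) * (q - 1)) %/ 2.

Definition Gamma (a b : nat) : nat :=
  let d := gcdn a b in
  if `[< eq1_solvable (a %/ d) (b %/ d) >] then 1 else 2.

Definition ceil_div (m d : nat) : nat := (m + d.-1) %/ d.
Definition a_seq (k n : nat) : nat := ceil_div (2 ^ (n + k - 1)) (2 ^ k + 1).

(* Main.v *)
Require Import Defs.
From mathcomp Require Import all_boot.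
From mathcomp Require Import boolp zify.

Lemma divE' d q r : r < d -> (q * d + r) %/ d = q.
Proof. move=> h. rewrite divnMDl; last by lia. by rewrite divn_small // addn0. Qed.

Lemma powX (X b : nat) : 1 <= X -> exists q, X ^ b = (X+1) * q + (if odd b then X else 1).
Proof.
move=> hX; elim: b => [|b [q IH]]; first by exists 0; rewrite expn0 muln0.
rewrite expnS IH /=; case: (odd b) => /=.
- exists (X * q + X - 1). have: 1 <= X * X by nia. nia.
- exists (X * q). nia.
Qed.

Lemma Gamma_double c : 0 < c -> Gamma c (c * 2) = 1.
Proof.
move=> hc; rewrite /Gamma gcdnMr divnn hc mulKn //.
rewrite asboolT //; by exists 0, 0.
Qed.

Lemma Gamma_odd c : 1 < c -> Gamma c (2 * c - 1) = 2.
Proof.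
move=> hc; rewrite /Gamma.
have -> : gcdn c (2 * c - 1) = 1.
  apply/eqP; rewrite -dvdn1.
  have E1 : 2 * c - (2 * c - 1) = 1 by lia.
  by have := dvdn_sub (dvdn_mull 2 (dvdn_gcdl c (2*c-1))) (dvdn_gcdr c (2*c-1)); rewrite E1.
rewrite !divn1 asboolF // => -[x [y H]].
case: c hc H => [|[|u]] // _.
have -> : u.+2 - 1 = u.+1 by lia.
have -> : 2 * u.+2 - 1 - 1 = u.+1 * 2 by lia.
rewrite mulnA mulnK // => H.
have H' : u.+2 * x + (2 * u.+2 - 1) * y = u.+1 * u.+1 by [].
rewrite (_ : 2 * u.+2 - 1 = 2 * u + 3) in H'; last by lia.
have Hy : y <= u.
  rewrite leqNgt; apply/negP => hy.
  have := leq_mul (leqnn (2 * u + 3)) hy.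
  have : u.+1 * u.+1 < (2 * u + 3) * u.+1 by rewrite ltn_mul2r; lia.
  lia.
have E : (x + 2 * y) * u.+2 = u * u.+2 + (1 + y).
  have : (2 * u + 3) * y + y = 2 * y * u.+2 by rewrite mulnDl mulnC mulnDr; lia.
  have : u.+1 * u.+1 = u * u.+2 + 1 by rewrite !mulSn !mulnS; lia.
  rewrite mulnDl. lia.
have := congr1 (modn^~ u.+2) E.
rewrite modnMl modnMDl modn_small; lia.
Qed.

Lemma ar1 X q P : 1 <= P -> (X.+1*q+1)*P + X = (q*P+1)*X.+1 + (P-1).
Proof. move=> hP. nia. Qed.
Lemma ar2 X q P : 1 <= P -> (X.+1*q+1)*P*2 + X = (2*(q*P+1) - 1)*X.+1 + (2*P-1).
Proof. move=> hP. nia. Qed.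
Lemma ar3 X q P : P <= X -> (X.+1*q+X)*P + X = (q*P+P)*X.+1 + (X-P).
Proof. move=> hP. nia. Qed.
Lemma ar4 X q P : 2 * P <= X -> (X.+1*q+X)*P*2 + X = ((q*P+P)*2)*X.+1 + (X-2*P).
Proof. move=> hP. nia. Qed.

Theorem theorem1p3 (k : nat) (hk : 0 < k) :
  forall n : nat, 1 <= n ->
    Gamma (a_seq k n) (a_seq k n.+1) = (if odd ((n - 1) %/ k) then 2 else 1).
Proof.
move=> n hn.
set b := (n - 1) %/ k; set i := (n - 1) %% k.
have hi : i < k by rewrite ltn_mod.
have hnb : n - 1 = b * k + i by rewrite /b /i -divn_eq.
set X := 2 ^ k; set P := 2 ^ i.
have hX : 2 <= X by rewrite /X -{1}(expn1 2) leq_exp2l.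
have hP1 : 1 <= P by rewrite /P expn_gt0.
have hP2 : 2 * P <= X by rewrite /P /X -expnS leq_exp2l.
have hm : 2 ^ (n + k - 1) = X ^ b.+1 * P.
  rewrite /X /P -expnM -expnD; congr (2 ^ _); lia.
have hm1 : 2 ^ (n.+1 + k - 1) = X ^ b.+1 * P * 2.
  rewrite -hm -expnSr; congr (2 ^ _); lia.
have [q hq] := powX X b.+1 (ltnW hX).
rewrite /a_seq /ceil_div hm1 hm hq -/X addn1 /=.
case hb: (odd b) => /=.
- rewrite ar1 // ar2 // !divE'; try lia.
  apply: Gamma_odd.
  have : X ^ 2 <= X ^ b.+1.
    apply: leq_pexp2l; first lia.
    by case: b hb {hnb hm hm1 hq} => [|b'].
  rewrite hq /= hb /= (_ : X ^ 2 = X * X) // => h.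
  have : 1 <= q by nia.
  nia.
- have hPX : P <= X by lia.
  rewrite ar3 // ar4 // !divE'; try lia.
  apply: Gamma_double; nia.
Qed.
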